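(* Suppose a checkpoint $C$ of epoch $e$ is finalized on chain $c$, and a checkpoint $C'$ of epoch $e'>e$ is justified on chain $c'$. Then $c$ and $c'$ have a common prefix up to epoch $e$, i.e. the block of $C$ is an ancestor of (or equal to) the blocks of $c'$ at epochs $\ge e$.
   Context: System: $n$ validators, each with equal stake, of which $f<n/3$ are Byzantine; the validator set is fixed between finalized checkpoints. Blocks form a tree rooted at the genesis block, and a chain is a path from the genesis block. A checkpoint is a pair $(b,e)$, where $b$ is the block of the first slot of epoch $e$ on the chain. A checkpoint vote is a signed pair, source $(a,e_a)$ and target $(b,e_b)$, with $e_a<e_b$. A supermajority link $(a,e_a)\to(b,e_b)$ exists when more than $2/3$ of the validators cast that checkpoint vote. A checkpoint is justified if it is the target of a supermajority link; the genesis checkpoint is justified. A checkpoint $(a,e_a)$ is finalized if: - it is justified; - there is a supermajority link $(a,e_a)\to(b,e_b)$ with $e_b-e_a\le 2$; - if $e_b-e_a=2$, the checkpoint at epoch $e_a+1$ on that chain is justified. Honest validators follow these rules: - each casts at most one checkpoint vote per epoch; - the source is the justified checkpoint with the highest epoch in its view; - the target is the current epoch's checkpoint on the candidate chain, selected by a fork choice rule that only follows chains extending the block of that highest justified checkpoint. *)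

(* Defs.v *)
From mathcomp Require Import all_boot.
Set Implicit Arguments. Unset Strict Implicit. Unset Printing Implicit Defensive.

(* Blocks form a tree rooted at [genesis] via [parent]; a chain is a path from
   genesis, identified with its tip block.  Each block has a slot; an epoch
   consists of [L] slots, epoch [e] starting at slot [e * L]. *)

Definition ancestor (Block : Type) (parent : Block -> Block) (a b : Block) : Prop :=
  exists k : nat, iter k parent b = a.

Definition block_tree (Block : Type) (genesis : Block) (parent : Block -> Block)
    (slot : Block -> nat) : Prop :=
  [/\ parent genesis = genesis,
      slot genesis = 0,
      (forall b, b <> genesis -> slot (parent b) < slot b)
    & (forall b, ancestor parent genesis b)].

(* [cp_block slot L c e b]: b is the block of the (first slot of) epoch e on
   chain c, i.e. the latest block of c whose slot is <= e * L.  Hence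
   (b, e) is the epoch-e checkpoint on chain c. *)
Definition cp_block (Block : Type) (parent : Block -> Block) (slot : Block -> nat)
    (L : nat) (c : Block) (e : nat) (b : Block) : Prop :=
  [/\ ancestor parent b c,
      slot b <= e * L
    & forall x, ancestor parent x c -> slot x <= e * L -> slot x <= slot b].

(* Checkpoints are pairs (block, epoch).  A set of checkpoint votes is given by
   a boolean predicate [vs v s t] : validator v (among 'I_n) cast the vote with
   source s and target t. *)

Definition link (Block : Type) (n : nat)
    (vs : 'I_n -> Block * nat -> Block * nat -> bool) (s t : Block * nat) : Prop :=
  2 * n < 3 * #|[set v : 'I_n | vs v s t]|.

Definition justified (Block : Type) (genesis : Block) (n : nat)
    (vs : 'I_n -> Block * nat -> Block * nat -> bool) (C : Block * nat) : Prop :=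
  C = (genesis, 0) \/ exists s, link vs s C.

Definition finalized (Block : Type) (genesis : Block) (parent : Block -> Block)
    (slot : Block -> nat) (L n : nat)
    (vs : 'I_n -> Block * nat -> Block * nat -> bool) (a : Block) (ea : nat) : Prop :=
  justified genesis vs (a, ea) /\
  exists (b : Block) (eb : nat),
    [/\ link vs (a, ea) (b, eb),
        eb - ea <= 2
      & eb - ea = 2 ->
        exists m, cp_block parent slot L b ea.+1 m /\ justified genesis vs (m, ea.+1)].

(* [view v x] is the set of votes validator v knows when voting in epoch x.
   Views contain only votes that were actually cast (votes are signed) and
   grow with time. *)
Definition views_sound (Block : Type) (n : nat)
    (vs : 'I_n -> Block * nat -> Block * nat -> bool)
    (view : 'I_n -> nat -> 'I_n -> Block * nat -> Block * nat -> bool) : Prop :=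
  forall v x w s t, view v x w s t -> vs w s t.

Definition views_monotone (Block : Type) (n : nat)
    (view : 'I_n -> nat -> 'I_n -> Block * nat -> Block * nat -> bool) : Prop :=
  forall v x y w s t, x <= y -> view v x w s t -> view v y w s t.

Definition votes_well_formed (Block : Type) (n : nat)
    (vs : 'I_n -> Block * nat -> Block * nat -> bool) : Prop :=
  forall v s t, vs v s t -> s.2 < t.2.

(* An honest validator v casts its epoch-x vote in epoch x (the target is the
   current epoch's checkpoint), so the target epoch is the epoch of casting. *)

Definition honest_one_vote (Block : Type) (n : nat) (honest : {set 'I_n})
    (vs : 'I_n -> Block * nat -> Block * nat -> bool) : Prop :=
  forall v, v \in honest -> forall s t s' t',
    vs v s t -> vs v s' t' -> t.2 = t'.2 -> s = s' /\ t = t'.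

Definition honest_source (Block : Type) (genesis : Block) (n : nat)
    (honest : {set 'I_n})
    (vs : 'I_n -> Block * nat -> Block * nat -> bool)
    (view : 'I_n -> nat -> 'I_n -> Block * nat -> Block * nat -> bool) : Prop :=
  forall v, v \in honest -> forall s t, vs v s t ->
    justified genesis (view v t.2) s /\
    (forall s', justified genesis (view v t.2) s' -> s'.2 <= s.2).

Definition honest_target (Block : Type) (parent : Block -> Block)
    (slot : Block -> nat) (L n : nat) (honest : {set 'I_n})
    (vs : 'I_n -> Block * nat -> Block * nat -> bool) : Prop :=
  forall v, v \in honest -> forall s t, vs v s t ->
    exists ch : Block, ancestor parent s.1 ch /\ cp_block parent slot L ch t.2 t.1.

(* Main.v *)
Require Import Defs.
From mathcomp Require Import all_boot.
From mathcomp Require Import zify.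
From Stdlib Require Import Classical.

Lemma anc_refl (B : Type) (p : B -> B) x : ancestor p x x.
Proof. by exists 0. Qed.

Lemma anc_trans (B : Type) (p : B -> B) x y z :
  ancestor p x y -> ancestor p y z -> ancestor p x z.
Proof. move=> [i <-] [j <-]; exists (i + j); by rewrite iterD. Qed.

Lemma anc_total (B : Type) (p : B -> B) x y z :
  ancestor p x z -> ancestor p y z -> ancestor p x y \/ ancestor p y x.
Proof.
move=> [i <-] [j <-]; case: (leqP i j) => h.
  right; exists (j - i); by rewrite -iterD subnK.
left; exists (i - j); by rewrite -iterD subnK // ltnW.
Qed.

Lemma slot_iter (B : Type) (g : B) (p : B -> B) (slot : B -> nat) :
  block_tree g p slot -> forall k z,
  slot (iter k p z) <= slot z /\ (iter k p z <> z -> slot (iter k p z) < slot z).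
Proof.
case=> pg _ ps _; elim=> [|k IH] z /=; first by split.
have [IH1 IH2] := IH z.
case: (classic (iter k p z = g)) => hg.
  rewrite hg pg -hg; split=> // ne; exact: IH2.
have := ps _ hg => lt; split; first by lia.
move=> _; lia.
Qed.

Lemma anc_slot_eq (B : Type) (g : B) (p : B -> B) (slot : B -> nat) x y :
  block_tree g p slot -> ancestor p y x -> slot x <= slot y -> y = x.
Proof.
move=> bt [k <-] h; have [h1 h2] := @slot_iter _ _ _ _ bt k x.
apply: NNPP => ne; have := h2 ne; lia.
Qed.

Lemma cp_desc (B : Type) (g : B) (p : B -> B) (slot : B -> nat) L a ch e ex x :
  block_tree g p slot -> ancestor p a ch -> slot a <= e * L -> e <= ex ->
  cp_block p slot L ch ex x -> ancestor p a x.
Proof.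
move=> bt ha hs hle [hx1 hx2 hx3].
case: (@anc_total _ _ _ _ _ ha hx1) => // hxa.
have hsa : slot a <= slot x.
  apply: hx3 => //; apply: leq_trans hs _; exact: leq_mul.
rewrite (@anc_slot_eq _ _ _ _ _ _ bt hxa hsa); exact: anc_refl.
Qed.
Lemma overlap (B : Type) (n : nat) (H : {set 'I_n})
  (vs : 'I_n -> B * nat -> B * nat -> bool) s1 t1 s2 t2 :
  3 * #|~: H| < n -> link vs s1 t1 -> link vs s2 t2 ->
  exists2 w, w \in H & vs w s1 t1 && vs w s2 t2.
Proof.
rewrite /link => hH l1 l2.
set A := [set v | vs v s1 t1] in l1; set C := [set v | vs v s2 t2] in l2.
have hU := cardsUI A C.
have hn : #|A :|: C| <= n by have := max_card (A :|: C); rewrite card_ord.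
have hID := cardsID (~: H) (A :&: C).
have hsub : #|A :&: C :&: ~: H| <= #|~: H| by apply: subset_leq_card; apply: subsetIr.
have : 0 < #|(A :&: C) :\: ~: H|.
  move: hH l1 l2 hU hn hID hsub.
  move: #|~: H| #|A| #|C| #|A :|: C| #|A :&: C| #|A :&: C :&: ~: H| #|A :&: C :\: ~: H|.
  move=> *; lia.
rewrite card_gt0 => /set0Pn [w]; rewrite !inE negbK => /andP [hw /andP [h1 h2]].
exists w => //; by rewrite h1 h2.
Qed.

Lemma link_sub (B : Type) (n : nat) (vs vs' : 'I_n -> B * nat -> B * nat -> bool) s t :
  (forall w, vs w s t -> vs' w s t) -> link vs s t -> link vs' s t.
Proof.
move=> hs; rewrite /link => h; apply: leq_trans h _; rewrite leq_mul2l /=.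
apply: subset_leq_card; apply/subsetP => w; rewrite !inE; exact: hs.
Qed.

Arguments overlap {B n H vs s1 t1 s2 t2}.

Lemma just_sub (B : Type) (g : B) (n : nat) (vs vs' : 'I_n -> B * nat -> B * nat -> bool) s :
  (forall w s t, vs w s t -> vs' w s t) -> justified g vs s -> justified g vs' s.
Proof.
move=> hs [->|[s0 l]]; [by left | right; exists s0; exact: (@link_sub _ _ _ _ _ _ (fun w => hs w _ _) l)].
Qed.

Lemma just_unique (B : Type) (g : B) (n : nat) (H : {set 'I_n})
  (vs : 'I_n -> B * nat -> B * nat -> bool) p q E :
  3 * #|~: H| < n -> votes_well_formed vs -> honest_one_vote H vs ->
  justified g vs (p, E) -> justified g vs (q, E) -> p = q.
Proof.
move=> hH wf ov [h1|[s1 l1]] [h2|[s2 l2]].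
- by case: h1 => ->; case: h2 => ->.
- case: h1 => _ hE; subst E.
  have [w _ /andP [h _]] := overlap hH l2 l2; have := wf _ _ _ h; by [].
- case: h2 => _ hE; subst E.
  have [w _ /andP [h _]] := overlap hH l1 l1; have := wf _ _ _ h; by [].
- have [w hw /andP [h1 h2]] := overlap hH l1 l2.
  by have [_ [->]] := ov w hw _ _ _ _ h1 h2 erefl.
Qed.

Arguments just_sub {B g n vs vs' s}.
Arguments just_unique {B g n H vs p q E}.

Theorem lemma2
  (Block : Type) (genesis : Block) (parent : Block -> Block) (slot : Block -> nat)
  (L : nat) (n : nat) (honest : {set 'I_n})
  (votes : 'I_n -> Block * nat -> Block * nat -> bool)
  (view : 'I_n -> nat -> 'I_n -> Block * nat -> Block * nat -> bool)
  (c c' a b' : Block) (e e' : nat) :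
  block_tree genesis parent slot ->
  0 < L ->
  3 * #|~: honest| < n ->
  votes_well_formed votes ->
  views_sound votes view ->
  views_monotone view ->
  honest_one_vote honest votes ->
  honest_source genesis honest votes view ->
  honest_target parent slot L honest votes ->
  (* C = (a, e) is finalized on chain c *)
  cp_block parent slot L c e a ->
  finalized genesis parent slot L votes a e ->
  (* C' = (b', e') is justified on chain c', with e' > e *)
  e < e' ->
  cp_block parent slot L c' e' b' ->
  justified genesis votes (b', e') ->
  (* the block of C is an ancestor of the blocks of c' at epochs >= e *)
  (forall x y, e <= x -> cp_block parent slot L c' x y -> ancestor parent a y) /\
  (forall y, ancestor parent y c' -> e * L <= slot y -> ancestor parent a y).
Proof.
move=> bt L0 hH wf snd mon ov hsrc htgt [_ sa _] [ja [b [eb [lab heb h2]]]] ee' cpb' jb'.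
have [w0 hw0 /andP [v0 _]] := overlap hH lab lab.
have eeb : e < eb := wf _ _ _ v0.
have aanc_b : ancestor parent a b.
  have [ch [h1 h2']] := htgt _ hw0 _ _ v0.
  exact: (@cp_desc _ _ _ _ _ _ _ _ _ _ bt h1 sa (ltnW eeb) h2').
have key : forall N ex x, ex <= N -> e < ex -> justified genesis votes (x, ex) ->
    ancestor parent a x.
  elim=> [|N IH] ex x hN hex jx; first by lia.
  have [[_ ex0]|[s ls]] := jx; first by lia.
  case: (ltngtP ex eb) => hcmp.
  - (* ex < eb: ex = e+1, eb = e+2 *)
    have ex1 : ex = e.+1 by lia.
    have [m [cpm jm]] : exists m, cp_block parent slot L b e.+1 m /\
        justified genesis votes (m, e.+1) by apply: h2; lia.
    subst ex; rewrite (just_unique hH wf ov jx jm).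
    exact: (@cp_desc _ _ _ _ _ _ _ _ _ _ bt aanc_b sa (leqnSn e) cpm).
  -
    have [w hw /andP [v1 v2]] := overlap hH lab ls.
    have [ja_v _] := hsrc _ hw _ _ v1.
    have [js_v smax] := hsrc _ hw _ _ v2.
    have ja_v' : justified genesis (view w ex) (a, e).
      apply: just_sub ja_v => w' s' t'; apply: mon; exact: ltnW.
    have hse : e <= s.2 := smax _ ja_v'.
    have js : justified genesis votes s by apply: just_sub js_v => ? ? ?; apply: snd.
    have hslt : s.2 < ex := wf _ _ _ v2.
    have aanc_s : ancestor parent a s.1.
      move: js hse hslt; case: s {ls v2 js_v smax} => s1 s2 /= js hse hslt.
      case: (ltngtP e s2) => h; [|by lia|].
      + apply: (IH s2) => //; lia.
      + subst s2; rewrite (just_unique hH wf ov js ja); exact: anc_refl.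
    have [ch [h1 h2']] := htgt _ hw _ _ v2.
    apply: (@cp_desc _ _ _ _ _ _ _ _ _ _ bt (@anc_trans _ _ _ _ _ aanc_s h1) sa _ h2').
    exact: ltnW.
  - subst ex.
    have jb : justified genesis votes (b, eb) by right; exists (a, e).
    by rewrite (just_unique hH wf ov jx jb).
have ab' : ancestor parent a b' := key e' e' b' (leqnn _) ee' jb'.
have [hb'c _ _] := cpb'.
have ac' := @anc_trans _ _ _ _ _ ab' hb'c.
split.
- move=> x y hx cpy.
  exact: (@cp_desc _ _ _ _ _ _ _ _ _ _ bt ac' sa hx cpy).
- move=> y hy hsy.
  case: (@anc_total _ _ _ _ _ ac' hy) => // hya.
  have : slot a <= slot y by lia.
  move/(@anc_slot_eq _ _ _ _ _ _ bt hya) => ->; exact: anc_refl.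
Qed.
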